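(* Let $\Omega\subseteq\mathbb{R}^n$ ($n\ge 1$) be a bounded measurable set, $Y$ a Hilbert space, $S:L^2(\Omega)\to Y$ linear and continuous, $u_a,u_b\in L^\infty(\Omega)$ with $U_{\text{ad}}:=\{u\in L^2(\Omega):\ u_a\le u\le u_b \text{ a.e.}\}\neq\emptyset$, and let $(\alpha_k)_{k\ge1}$ be a uniformly bounded sequence of positive reals. Let $z,z^\delta\in Y$ with $\|z-z^\delta\|_Y\le\delta$, $\delta\ge 0$. Let $(u_k)_k$ and $(u_k^\delta)_k$ be the sequences generated by the Bregman iteration (described in the context) with data $z$ and $z^\delta$, respectively. Then for every $k\ge1$, $$\sum_{i=1}^k \frac{1}{\alpha_i}\|u_i^\delta-u_i\|_{L^2(\Omega)}^2\le \delta^2\sum_{i=1}^k\Big(\frac{1}{\alpha_i^2}+\gamma_{i-1}^2\Big),$$ where $\gamma_k:=\sum_{j=1}^k \frac{1}{\alpha_j}$ and $\gamma_0:=0$.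
   Context: Define $J:L^2(\Omega)\to\mathbb{R}\cup\{+\infty\}$ by $J(u)=\frac12\|u\|^2+I_{U_{\text{ad}}}(u)$, where $I_{U_{\text{ad}}}$ is the indicator function ($0$ on $U_{\text{ad}}$, $+\infty$ otherwise), and for $\lambda\in\partial J(v)$ the Bregman distance $D^\lambda(u,v):=J(u)-J(v)-(u-v,\lambda)_{L^2}$. The Bregman iteration with data $\zeta\in Y$ is: set $u_0=P_{U_{\text{ad}}}(0)$ (pointwise projection onto $[u_a,u_b]$), $\lambda_0=0\in\partial J(u_0)$; for $k=1,2,\dots$ let $u_k$ be the (unique) minimizer of $u\mapsto\frac12\|Su-\zeta\|_Y^2+\alpha_k D^{\lambda_{k-1}}(u,u_{k-1})$ over $L^2(\Omega)$, then set $\mu_k:=\sum_{i=1}^k\frac{1}{\alpha_i}(\zeta-Su_i)$ and $\lambda_k:=S^\ast\mu_k$. The sequence $(u_k^\delta)_k$ is obtained with $\zeta=z^\delta$ (with corresponding $\lambda_k^\delta$), and $(u_k)_k$ with $\zeta=z$. *)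

(* Defs.v *)
From HB Require Import structures.
From mathcomp Require Import all_boot all_order all_algebra.
From mathcomp Require Import all_classical all_reals all_analysis.
Set Implicit Arguments. Unset Strict Implicit. Unset Printing Implicit Defensive.
Import Order.TTheory GRing.Theory Num.Theory.
Import numFieldNormedType.Exports.
Local Open Scope classical_set_scope.
Local Open Scope ring_scope.

Section BregmanDefs.
Context d (T : measurableType d) (R : realType).
Variable mu : {measure set T -> \bar R}.

Definition L2 := LfunType mu (lee1n 2).

Definition L2norm (u : T -> R) : R := fine ('N[mu]_2%:E[EFin \o u])%E.
Definition L2ip (u v : T -> R) : R := \int[mu]_x (u x * v x).

Definition Uad (ua ub : T -> R) (u : T -> R) : Prop :=
  {ae mu, forall x, ua x <= u x <= ub x}.

Definition Jfun (ua ub : T -> R) (u : L2) : \bar R :=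
  if `[< Uad ua ub u >] then ((1/2) * L2norm u ^+ 2)%:E else +oo%E.

Definition bregman_dist (ua ub : T -> R) (lam u v : L2) : \bar R :=
  (Jfun ua ub u - Jfun ua ub v - (L2ip (u - v : L2) lam)%:E)%E.

(** real inner product compatible with the norm: Y is then a Hilbert space
    when Y is a complete normed module *)
Definition is_inner_product (Y : normedModType R) (ip : Y -> Y -> R) : Prop :=
  [/\ forall x y, ip x y = ip y x,
      forall a x y z, ip (a *: x + y) z = a * ip x z + ip y z
    & forall x, ip x x = `|x| ^+ 2].

Variables (Y : normedModType R) (ip : Y -> Y -> R).

Definition bregman_mu (S : L2 -> Y) (alpha : nat -> R) (zeta : Y)
    (u : nat -> L2) (k : nat) : Y :=
  \sum_(1 <= i < k.+1) (alpha i)^-1 *: (zeta - S (u i)).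

(** u is the Bregman iteration with data zeta; lambda_k = S^* mu_k,
    where Sadj is the adjoint of S *)
Definition bregman_iteration (ua ub : T -> R) (S : L2 -> Y) (Sadj : Y -> L2)
    (alpha : nat -> R) (zeta : Y) (u : nat -> L2) : Prop :=
  (* u_0 = P_{U_ad}(0), pointwise projection of 0 onto [ua, ub] *)
  {ae mu, forall x, u 0%N x = Num.max (ua x) (Num.min 0 (ub x))} /\
  forall k : nat, (1 <= k)%N -> forall w : L2,
    (((1/2) * `|S (u k) - zeta| ^+ 2)%:E
       + (alpha k)%:E * bregman_dist ua ub (Sadj (bregman_mu S alpha zeta u k.-1))
                          (u k) (u k.-1)
     <= ((1/2) * `|S w - zeta| ^+ 2)%:E
       + (alpha k)%:E * bregman_dist ua ub (Sadj (bregman_mu S alpha zeta u k.-1))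
                          w (u k.-1))%E.

End BregmanDefs.

Definition gamma_seq (R : realType) (alpha : nat -> R) (k : nat) : R :=
  \sum_(1 <= j < k.+1) (alpha j)^-1.

Arguments Jfun {d T R} mu ua ub u.
Arguments bregman_dist {d T R} mu ua ub lam u v.
Arguments bregman_mu {d T R} mu {Y} S alpha zeta u k.
Arguments bregman_iteration {d T R} mu {Y} ua ub S Sadj alpha zeta u.

(* Main.v *)
Require Import Defs.
From HB Require Import structures.
From mathcomp Require Import all_boot all_order all_algebra.
From mathcomp Require Import all_classical all_reals all_analysis.
From mathcomp Require Import measurable_realfun.
From mathcomp Require Import ring lra.
Import Order.TTheory GRing.Theory Num.Theory.
Import numFieldNormedType.Exports.
Local Open Scope classical_set_scope.
Local Open Scope ring_scope.

Section S.
Context {d} {T : measurableType d} {R : realType} {mu : {measure set T -> \bar R}}.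

Lemma L2sq (f : L2 mu) : ((L2norm mu f)^+2)%:E = (\int[mu]_x ((f x)^+2)%:E)%E.
Proof.
have h := finite_norm_fine f.
have h0 : 0 <= L2norm mu f by rewrite -lee_fin /L2norm h Lnorm_ge0.
rewrite -powR_mulrn // -poweR_EFin /L2norm h poweR_Lnorm ?pnatr_eq0 //.
apply: eq_integral => x _ /=.
by rewrite powR_mulrn // real_normK // num_real.
Qed.

Lemma msq (f : L2 mu) : measurable_fun [set: T] (fun x : T => ((f x)^+2)%:E).
Proof.
apply/measurable_EFinP; apply: measurable_funX; by [].
Qed.

Lemma L2conv (a b : L2 mu) t : 0 <= t <= 1 ->
  L2norm mu ((1-t)*:a + t*:b) ^+ 2 + t*(1-t)* L2norm mu (a-b) ^+2
  = (1-t)* L2norm mu a ^+2 + t* L2norm mu b ^+2.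
Proof.
move=> /andP[t0 t1].
have t10 : 0 <= 1 - t by rewrite subr_ge0.
set s := 1 - t in t10 *.
apply: EFin_inj; rewrite EFinD -mulrA (EFinM t) (EFinM s) [X in _ = X]EFinD (EFinM s) (EFinM t) !L2sq.
have sq0 (f : L2 mu) : forall x, [set: T] x -> (0 <= ((f x)^+2)%:E)%E.
  by move=> x _; rewrite lee_fin sqr_ge0.
rewrite -[in X in _ = X](ge0_integralZl_EFin _ _ (sq0 a)) //; last exact: msq.
rewrite -[in X in _ = X](ge0_integralZl_EFin _ _ (sq0 b)) //; last exact: msq.
rewrite -(ge0_integralZl_EFin _ _ (sq0 (a - b))) //; last exact: msq.
rewrite -ge0_integralZl_EFin //.
rewrite -ge0_integralD //.
rewrite -[X in _ = X]ge0_integralD //.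
1: apply: eq_integral => x _.
1: rewrite -!EFinM -!EFinD; congr EFin.
1: rewrite /s; have -> : ((1-t) *: a + t *: b) x = (1-t) * a x + t * b x by [].
1: have -> : (a - b) x = a x - b x by [].
1: ring.
all: try (by move=> x _; rewrite ?mule_ge0 ?lee_fin ?sqr_ge0 ?mulr_ge0).
all: repeat apply: emeasurable_funM => //; try exact: msq.
Qed.


Lemma L2sym (a b : L2 mu) : L2norm mu (a - b) ^+ 2 = L2norm mu (b - a) ^+ 2.
Proof.
apply: EFin_inj; rewrite !L2sq; apply: eq_integral => x _.
have -> : (a - b) x = a x - b x by [].
have -> : (b - a) x = b x - a x by [].
by rewrite -opprB sqrrN.
Qed.

Lemma Uad_conv (ua ub : T -> R) (a b : L2 mu) t : 0 <= t <= 1 ->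
  Uad mu ua ub a -> Uad mu ua ub b -> Uad mu ua ub ((1-t)*:a + t*:b).
Proof.
move=> /andP[t0 t1] ha hb; apply: filterS2 ha hb => x /andP[a1 a2] /andP[b1 b2].
have -> : ((1-t) *: a + t *: b) x = (1-t) * a x + t * b x by [].
apply/andP; split; nra.
Qed.

Lemma Uad_u0 (ua ub : T -> R) (v u0 : L2 mu) : Uad mu ua ub v ->
  {ae mu, forall x, u0 x = Num.max (ua x) (Num.min 0 (ub x))} -> Uad mu ua ub u0.
Proof.
move=> hv h; apply: filterS2 hv h => x /andP[a1 a2] ->.
apply/andP; split; first by rewrite le_max lexx.
rewrite ge_max ge_min lexx orbT andbT.
exact: le_trans a2.
Qed.
End S.

Section IP.
Context {R : realType} {Y : normedModType R} {ip : Y -> Y -> R}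
  (H : is_inner_product ip).

Lemma ip_sym x y : ip x y = ip y x. Proof. by case: H. Qed.
Lemma ip_lin a x y z : ip (a *: x + y) z = a * ip x z + ip y z. Proof. by case: H. Qed.
Lemma ip_nrm x : ip x x = `|x| ^+ 2. Proof. by case: H. Qed.
Lemma ip0l z : ip 0 z = 0.
Proof. have := ip_lin 1 0 0 z; rewrite scaler0 addr0 mul1r; lra. Qed.
Lemma ipDl x y z : ip (x + y) z = ip x z + ip y z.
Proof. by rewrite -[x]scale1r ip_lin mul1r scale1r. Qed.
Lemma ipZl a x z : ip (a *: x) z = a * ip x z.
Proof. by rewrite -[a *: x]addr0 ip_lin ip0l addr0. Qed.
Lemma ipNl x z : ip (- x) z = - ip x z.
Proof. by rewrite -scaleN1r ipZl mulN1r. Qed.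
Lemma ipBl x y z : ip (x - y) z = ip x z - ip y z.
Proof. by rewrite ipDl ipNl. Qed.
Lemma ipDr x y z : ip z (x + y) = ip z x + ip z y.
Proof. by rewrite !(ip_sym z) ipDl. Qed.
Lemma ipZr a x z : ip z (a *: x) = a * ip z x.
Proof. by rewrite !(ip_sym z) ipZl. Qed.
Lemma ipBr x y z : ip z (x - y) = ip z x - ip z y.
Proof. by rewrite !(ip_sym z) ipBl. Qed.
Lemma ipexp x y t : ip (x + t *: y) (x + t *: y) = ip x x + 2 * t * ip x y + t ^+ 2 * ip y y.
Proof. rewrite ipDl !ipDr !ipZl !ipZr (ip_sym y x); ring. Qed.
Lemma ipsq x y : ip (x + y) (x + y) = ip x x + 2 * ip x y + ip y y.
Proof. rewrite ipDl !ipDr (ip_sym y x); ring. Qed.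
End IP.

Lemma vec1 (R : ringType) (V : lmodType R) (t : R) (x y : V) :
  (1 - t) *: x + t *: y = x + t *: (y - x).
Proof. by rewrite scalerBl scale1r scalerBr -addrA [- _ + _]addrC. Qed.

Lemma vec2 (V : zmodType) (a b c d : V) : (a - b) - (c - d) = (a - c) - (b - d).
Proof.
by rewrite !opprB addrACA [in RHS]addrACA; congr (_ + _); exact: addrC.
Qed.

Lemma small_t (R : realType) (A B : R) : 0 <= B ->
  (forall t, 0 < t <= 1 -> 0 <= t * A + t ^+ 2 * B) -> 0 <= A.
Proof.
move=> B0 h; rewrite leNgt; apply/negP => A0.
have BA : 0 < B - A by lra.
pose t := - A / (B - A).
have t0 : 0 < t by rewrite /t divr_gt0 // oppr_gt0.
have t1 : t <= 1 by rewrite /t ler_pdivrMr // mul1r; lra.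
have := h t; rewrite t0 t1 => /(_ isT).
have -> : t * A + t ^+ 2 * B = t * (- A ^+ 2 / (B - A)).
  rewrite /t; field; lra.
rewrite pmulr_rge0 // pmulr_lge0 ?invr_gt0 // oppr_ge0 => hA.
have : 0 < A ^+ 2 by rewrite exprn_even_gt0 //= lt_eqF.
lra.
Qed.

Section VI.
Context {d} {T : measurableType d} {R : realType} {mu : {measure set T -> \bar R}}.
Context {Y : normedModType R} {ip : Y -> Y -> R} (H : is_inner_product ip)
  {S : {linear L2 mu -> Y}} {Sadj : Y -> L2 mu}
  (Sadj_adj : forall u y, ip (S u) y = L2ip mu u (Sadj y))
  {ua ub : T -> R} {alpha : nat -> R}
  (alpha_pos : forall k, (1 <= k)%N -> 0 < alpha k)
  {zeta : Y} {u : nat -> L2 mu}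
  (hu : bregman_iteration mu ua ub S Sadj alpha zeta u)
  (Uad_ne : exists v : L2 mu, Uad mu ua ub v).

Lemma Jfun_fin (x : L2 mu) : Uad mu ua ub x ->
  Jfun mu ua ub x = ((1/2) * L2norm mu x ^+ 2)%:E.
Proof. by move=> h; rewrite /Jfun asboolT. Qed.

Lemma bd_fin (lam x y : L2 mu) : Uad mu ua ub x -> Uad mu ua ub y ->
  bregman_dist mu ua ub lam x y =
  ((1/2) * L2norm mu x ^+ 2 - (1/2) * L2norm mu y ^+ 2 - L2ip mu (x - y) lam)%:E.
Proof. by move=> hx hy; rewrite /bregman_dist !Jfun_fin // !EFinB. Qed.

Lemma Uad_all k : Uad mu ua ub (u k).
Proof.
elim: k => [|k IH].
  by case: Uad_ne => v hv; apply: Uad_u0 hv hu.1.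
apply/asboolP; apply/negP => /negP/asboolPn hn.
have := hu.2 k.+1 isT (u k).
rewrite /= [in X in (_ <= X)%E]bd_fin // /bregman_dist /Jfun (asboolF hn) (asboolT IH).
move=> h.
have E (a b : R) : (+oo + a%:E + b%:E = +oo :> \bar R)%E by rewrite !addye.
rewrite E in h.
move: h; rewrite mulry gtr0_sg ?mul1e; last exact: alpha_pos.
by rewrite addey // -EFinM -EFinD leye_eq.
Qed.


Lemma VI n (w : L2 mu) : Uad mu ua ub w ->
  (1/2) * L2norm mu (u n.+1) ^+ 2
  + ip (S w - S (u n.+1)) (bregman_mu mu S alpha zeta u n.+1)
  + (1/2) * L2norm mu (w - u n.+1) ^+ 2 <= (1/2) * L2norm mu w ^+ 2.
Proof.
move=> hw.
have huk := Uad_all n.+1; have hup := Uad_all n.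
have a0 : 0 < alpha n.+1 by exact: alpha_pos.
set uk := u n.+1; set up := u n.
set m0 := bregman_mu mu S alpha zeta u n.
have mE : bregman_mu mu S alpha zeta u n.+1 = m0 + (alpha n.+1)^-1 *: (zeta - S uk).
  by rewrite /bregman_mu big_nat_recr.
set p := S uk - zeta; set q := S w - S uk.
set Qk := L2norm mu uk ^+ 2; set Qw := L2norm mu w ^+ 2;
set Qd := L2norm mu (w - uk) ^+ 2.
set M := ip q m0; set X := ip q (zeta - S uk).
have pqE : ip p q = - X.
  by rewrite /X /p -opprB (ipNl H) (ip_sym H).
set A := ip p q + alpha n.+1 * (Qw / 2 - Qk / 2) - alpha n.+1 * Qd / 2 - alpha n.+1 * M.
set B := ip q q / 2 + alpha n.+1 * Qd / 2.
have B0 : 0 <= B.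
  rewrite /B (ip_nrm H); apply: addr_ge0; first by rewrite divr_ge0 // sqr_ge0.
  by rewrite divr_ge0 // mulr_ge0 ?sqr_ge0 // ltW.
have : 0 <= A.
  apply: (@small_t _ A B B0) => t /andP[t0 t1].
  have ht : 0 <= t <= 1 by rewrite ltW.
  set wt := (1 - t) *: uk + t *: w.
  have hwt : Uad mu ua ub wt by exact: Uad_conv.
  have := hu.2 n.+1 isT wt.
  rewrite /= !bd_fin // -!EFinM -!EFinD lee_fin -!Sadj_adj.
  have SwtE : S wt = S uk + t *: q.
    by rewrite /wt vec1 linearD linearZ linearB.
  have F1 : `|S wt - zeta| ^+ 2 = ip p p + 2 * t * ip p q + t ^+ 2 * ip q q.
    by rewrite -(ip_nrm H) SwtE -(ipexp H) /p addrAC.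
  have F0 : `|S uk - zeta| ^+ 2 = ip p p by rewrite -(ip_nrm H).
  have F2 : ip (S (wt - up)) m0 = ip (S (uk - up)) m0 + t * M.
    by rewrite !linearB SwtE addrAC (ipDl H) (ipZl H).
  have := L2conv uk w t ht; rewrite (L2sym uk w) -/Qd -/Qk -/Qw -/wt => hQ.
  have F3 : L2norm mu wt ^+ 2 = (1 - t) * Qk + t * Qw - t * (1 - t) * Qd by lra.
  rewrite F0 F1 F2 F3 -/Qk.
  rewrite /A /B; nra.
move=> A0.
set ai := (alpha n.+1)^-1.
have hai : 0 < ai by rewrite invr_gt0.
have := mulr_ge0 (ltW hai) A0.
have -> : ai * A = - ai * X + (Qw / 2 - Qk / 2 - Qd / 2 - M).
  rewrite /A pqE /ai; field; exact: lt0r_neq0.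
rewrite mE (ipDr H) (ipZr H) -/M -/X.
rewrite -/ai; lra.
Qed.
End VI.

Theorem mainTheorem1 (d : measure_display) (T : measurableType d) (R : realType)
  (mu : {measure set T -> \bar R})
  (mu_fin : (mu [set: T] < +oo)%E)
  (Y : completeNormedModType R) (ip : Y -> Y -> R)
  (ip_inner : is_inner_product ip)
  (S : {linear L2 mu -> Y})
  (S_bounded : exists C : R, forall u : L2 mu, `|S u| <= C * L2norm mu u)
  (Sadj : Y -> L2 mu)
  (Sadj_adj : forall (u : L2 mu) (y : Y), ip (S u) y = L2ip mu u (Sadj y))
  (ua ub : T -> R)
  (ua_meas : measurable_fun [set: T] ua) (ub_meas : measurable_fun [set: T] ub)
  (ua_inf : ('N[mu]_+oo[EFin \o ua] < +oo)%E)
  (ub_inf : ('N[mu]_+oo[EFin \o ub] < +oo)%E)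
  (Uad_ne : exists u : L2 mu, Uad mu ua ub u)
  (alpha : nat -> R)
  (alpha_pos : forall k, (1 <= k)%N -> 0 < alpha k)
  (alpha_bnd : exists M : R, forall k, (1 <= k)%N -> alpha k <= M)
  (z zd : Y) (delta : R) (delta_ge0 : 0 <= delta)
  (hz : `|z - zd| <= delta)
  (u ud : nat -> L2 mu)
  (hu : bregman_iteration mu ua ub S Sadj alpha z u)
  (hud : bregman_iteration mu ua ub S Sadj alpha zd ud) :
  forall k : nat, (1 <= k)%N ->
    \sum_(1 <= i < k.+1) (alpha i)^-1 * L2norm mu (ud i - u i : L2 mu) ^+ 2
    <= delta ^+ 2 * \sum_(1 <= i < k.+1)
                      ((alpha i)^-2 + gamma_seq alpha i.-1 ^+ 2).
Proof.
move=> k k1.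
pose a i := (alpha i)^-1.
pose v i := S (ud i) - S (u i).
pose dd := zd - z.
pose W n := \sum_(1 <= j < n.+1) a j *: v j.
pose Q i := L2norm mu (ud i - u i : L2 mu) ^+ 2.
have hdd : ip dd dd <= delta ^+ 2.
  rewrite (ip_nrm ip_inner) /dd -normrN opprB.
  by rewrite lerXn2r // ?nnegrE.
have muE n : bregman_mu mu S alpha zd ud n - bregman_mu mu S alpha z u n
    = gamma_seq alpha n *: dd - W n.
  rewrite /bregman_mu /gamma_seq /W -sumrB scaler_suml -sumrB.
  apply: eq_bigr => j _.
  by rewrite -!scalerBr vec2.
have Ei n : Q n.+1 <= ip (v n.+1) (gamma_seq alpha n.+1 *: dd - W n.+1).
  have h1 := VI ip_inner Sadj_adj alpha_pos hu Uad_ne n (ud n.+1) (Uad_all alpha_pos hud Uad_ne n.+1).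
  have h2 := VI ip_inner Sadj_adj alpha_pos hud Uad_ne n (u n.+1) (Uad_all alpha_pos hu Uad_ne n.+1).
  rewrite -muE (ipBr ip_inner).
  move: h2; rewrite (L2sym (u n.+1)) -opprB (ipNl ip_inner) -/(v n.+1) -/(Q n.+1).
  move: h1; rewrite -/(v n.+1) -/(Q n.+1).
  lra.
have claim n : \sum_(1 <= i < n.+1) a i * Q i + ip (W n) (W n) / 2
    <= delta ^+ 2 / 2 * \sum_(1 <= i < n.+1) gamma_seq alpha i ^+ 2.
  elim: n => [|n IH].
    rewrite /W !big_geq // (ip0l ip_inner); lra.
  rewrite !(big_nat_recr n.+1) //=.
  have WE : W n.+1 = W n + a n.+1 *: v n.+1 by rewrite /W big_nat_recr.
  set w := a n.+1 *: v n.+1 in WE.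
  set g := gamma_seq alpha n.+1.
  have ha : 0 < a n.+1 by rewrite invr_gt0 alpha_pos.
  have h1 : a n.+1 * Q n.+1 <= g * ip w dd - ip w (W n) - ip w w.
    have := ler_wpM2l (ltW ha) (Ei n).
    rewrite -(ipZl ip_inner) -/w -/g (ipBr ip_inner (g *: dd)) WE (ipZr ip_inner) (ipDr ip_inner (W n) w).
    lra.
  have h2 : 0 <= ip w w - 2 * g * ip w dd + g ^+ 2 * ip dd dd.
    have := ipexp ip_inner w dd (- g).
    rewrite (ip_nrm ip_inner) => E.
    have : 0 <= `|w + - g *: dd| ^+ 2 by apply: sqr_ge0.
    rewrite E sqrrN; lra.
  have h3 : g ^+ 2 * ip dd dd <= g ^+ 2 * delta ^+ 2.
    by apply: ler_wpM2l => //; apply: sqr_ge0.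
  rewrite WE (ipsq ip_inner) (ip_sym ip_inner (W n) w).
  lra.
apply: le_trans (_ : delta ^+ 2 / 2 * \sum_(1 <= i < k.+1) gamma_seq alpha i ^+ 2 <= _).
  apply: le_trans (claim k).
  rewrite lerDl divr_ge0 // (ip_nrm ip_inner) sqr_ge0 //.
rewrite -mulrA ler_wpM2l ?sqr_ge0 // mulr_sumr.
apply: ler_sum_nat => i /andP[i1 _].
case: i i1 => // i _ /=.
rewrite /gamma_seq big_nat_recr //= -exprVn.
set x := \sum_(1 <= j < i.+1) _.
set y := (alpha i.+1)^-1.
have h : 0 <= (x - y) ^+ 2 by apply: sqr_ge0.
rewrite ler_pdivrMl //.
nra.
Qed.
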